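(* Let $\mathbf A\in\mathbb R^{n\times p}$ have columns $\mathbf a_1,\dots,\mathbf a_p$ normalized to zero sample mean and unit norm: $\mathbf 1^T\mathbf a_k=0$ and $\|\mathbf a_k\|_2=1$ for $k=1,\dots,p$, and let $\rho_{ij}=\mathbf a_i^T\mathbf a_j$. Let $\mathbf y\in\mathbb R^n$, let $\mathbf w$ be a weight vector as in the context and $\Delta:=\min\{w_l-w_{l+1}: l=1,\dots,p-1\}$. Let $\widehat{\mathbf x}$ be any minimizer of $\frac12\|\mathbf A\mathbf x-\mathbf y\|_2^2+\Omega_{\mathbf w}(\mathbf x)$ over $\mathbf x\in\mathbb R^p$. Then for every pair $(i,j)$ with $\|\mathbf y\|_2\sqrt{2-2\rho_{ij}\operatorname{sign}(\widehat x_i\widehat x_j)}<\Delta$, we have $|\widehat x_i|=|\widehat x_j|$.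
   Context: $\mathbf w=(w_1,\dots,w_p)\in\mathbb R^p_+$ satisfies $w_1\ge w_2\ge\cdots\ge w_p\ge0$ and $w_1>0$. The ordered weighted $\ell_1$ (OWL) norm is $\Omega_{\mathbf w}(\mathbf x)=\sum_{i=1}^p w_i|x|_{[i]}$, where $|x|_{[i]}$ denotes the $i$-th largest component of $\mathbf x$ in magnitude. $\mathbf 1$ is the all-ones vector; $\operatorname{sign}$ denotes the sign function. *)

(* Defs.v *)
From mathcomp Require Import all_boot all_order all_algebra.
Set Implicit Arguments. Unset Strict Implicit. Unset Printing Implicit Defensive.
Import Order.TTheory GRing.Theory Num.Theory.
Local Open Scope ring_scope.

(* Magnitudes of the entries of x, sorted in nonincreasing order:
   the k-th entry (0-based) is |x|_[k+1]. *)
Definition sorted_abs (R : rcfType) (p : nat) (x : 'cV[R]_p) : seq R :=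
  sort (fun a b : R => b <= a) [seq `|x i 0| | i <- enum 'I_p].

Definition owl (R : rcfType) (p : nat) (w : 'cV[R]_p) (x : 'cV[R]_p) : R :=
  \sum_(i < p) w i 0 * nth 0 (sorted_abs x) i.

Definition owl_weights (R : rcfType) (p : nat) (w : 'cV[R]_p) : Prop :=
  (forall i j : 'I_p, (i <= j)%N -> w j 0 <= w i 0) /\
  (forall i : 'I_p, 0 <= w i 0) /\
  (exists i0 : 'I_p, nat_of_ord i0 = 0%N /\ 0 < w i0 0).

Definition owl_gaps (R : rcfType) (p : nat) (w : 'cV[R]_p) : seq R :=
  [seq w lm.1 0 - w lm.2 0 | lm <- enum (predT : pred ('I_p * 'I_p)%type)
     & nat_of_ord lm.2 == (nat_of_ord lm.1).+1].

(* Delta = min_{l=1..p-1} (w_l - w_{l+1}); for p >= 2 the list of gaps is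
   nonempty and its head is one of its elements, so this is the true minimum. *)
Definition owl_Delta (R : rcfType) (p : nat) (w : 'cV[R]_p) : R :=
  foldr Order.min (head 0 (owl_gaps w)) (owl_gaps w).

Definition owl_obj (R : rcfType) (n p : nat) (A : 'M[R]_(n, p))
  (y : 'cV[R]_n) (w : 'cV[R]_p) (x : 'cV[R]_p) : R :=
  2^-1 * \sum_(r < n) ((A *m x) r 0 - y r 0) ^+ 2 + owl w x.

Definition norm2 (R : rcfType) (n : nat) (y : 'cV[R]_n) : R :=
  Num.sqrt (\sum_(r < n) y r 0 ^+ 2).

(* Main.v *)
Require Import Defs.
From mathcomp Require Import all_boot all_order all_algebra all_fingroup.
From mathcomp Require Import ring lra zify.
Import Order.TTheory GRing.Theory Num.Theory.
Local Open Scope ring_scope.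
Set Implicit Arguments. Unset Strict Implicit.
Section S.
Variable R : rcfType.
Variable p : nat.

Definition Fs (u f : 'I_p -> R) (s : {perm 'I_p}) : R := \sum_(k < p) u k * f (s k).

Lemma Fs_swap u f s (a b : 'I_p) : a != b ->
  Fs u f (tperm a b * s)%g = Fs u f s + (u a - u b) * (f (s b) - f (s a)).
Proof.
move=> ab.
rewrite /Fs (bigD1 a) // (bigD1 b) 1?eq_sym //= [X in _ = X + _](bigD1 a) //.
rewrite [X in _ = _ + X + _](bigD1 b) 1?eq_sym //=.
rewrite !permM tpermL tpermR.
rewrite [X in _ + (_ + X) = _](eq_bigr (fun k => u k * f (s k))); last first.
  move=> k /andP[ka kb]; rewrite permM tpermD // eq_sym //.
ring.
Qed.
End S.
Section S.
Variable R : rcfType.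
Variable p : nat.

Definition mx (x : 'cV[R]_p) : 'I_p -> R := fun l => `|x l 0|.
Definition wf (w : 'cV[R]_p) : 'I_p -> R := fun k => w k 0.

Lemma owl_max (w x : 'cV[R]_p) : (forall i j : 'I_p, (i <= j)%N -> w j 0 <= w i 0) ->
  exists s, owl w x = Fs (wf w) (mx x) s /\
     (forall a b : 'I_p, (a < b)%N -> mx x (s b) <= mx x (s a)) /\
     (forall t, Fs (wf w) (mx x) t <= owl w x).
Proof.
move=> wmono.
set f := mx x. set F := Fs (wf w) f. set G := Fs (fun k : 'I_p => (p - k)%:R) f.
have [s1 _ Hs1] := @arg_maxP _ R _ 1%g predT F isT.
have {}Hs1 : forall t, F t <= F s1 by move=> t; exact: Hs1.
have [s2 /eqP Fs2 Hs2] := @arg_maxP _ R _ s1 (fun s => F s == F s1) G (eqxx _).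
have srt : forall a b : 'I_p, (a < b)%N -> f (s2 b) <= f (s2 a).
  move=> a b ab; rewrite leNgt; apply/negP => lt.
  have ab' : a != b by rewrite neq_ltn ab.
  have e1 := Fs_swap (wf w) f s2 ab'.
  have e2 := Fs_swap (fun k : 'I_p => (p - k)%:R) f s2 ab'.
  have : F (tperm a b * s2)%g == F s1.
    rewrite eq_le Hs1 //= -Fs2 /F e1 lerDl; apply: mulr_ge0.
      by rewrite subr_ge0 /wf; apply: wmono; apply: ltnW.
    by rewrite subr_ge0 ltW.
  move/Hs2 => HG.
  have {HG} : G (tperm a b * s2)%g <= G s2 by exact: HG.
  rewrite /G e2 gerDl.
  have : 0 < ((p - a)%:R - (p - b)%:R : R) * (f (s2 b) - f (s2 a)).
    apply: mulr_gt0; last by rewrite subr_gt0.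
    rewrite subr_gt0 ltr_nat; have := ltn_ord b; lia.
  by move=> h1 h2; have := lt_le_trans h1 h2; rewrite ltxx.
have sa : sorted_abs x = [seq f (s2 k) | k <- enum 'I_p].
  apply: (sorted_eq (leT := fun a b : R => b <= a)).
  - by move=> b a c /= h1 h2; exact: le_trans h2 h1.
  - by move=> a b /andP[h1 h2]; apply: le_anti; rewrite h1 h2.
  - by apply: sort_sorted => a b; exact: le_total.
  - apply/(sortedP 0) => k; rewrite size_map size_enum_ord => kp.
    have k1 : (k < p)%N by apply: ltn_trans kp.
    have nthE : forall (m : nat) (hm : (m < p)%N),
        nth 0 [seq f (s2 k) | k <- enum 'I_p] m = f (s2 (Ordinal hm)).
      move=> m hm; rewrite (nth_map (Ordinal hm)); last by rewrite size_enum_ord.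
      by do 2 f_equal; apply: val_inj; rewrite /= nth_enum_ord.
    rewrite (nthE k k1) (nthE _ kp).
    by apply: srt => /=.
  - rewrite /sorted_abs perm_sort.
    have -> : [seq f (s2 k) | k <- enum 'I_p] = map f (map s2 (enum 'I_p)) by exact: map_comp.
    apply: perm_map; apply: uniq_perm; first exact: enum_uniq.
      by rewrite map_inj_uniq ?enum_uniq //; exact: perm_inj.
    move=> k; rewrite mem_enum; symmetry; apply/mapP; exists (s2^-1 k)%g; rewrite ?mem_enum ?permKV //.
have ow : owl w x = F s2.
  rewrite /owl sa /F /Fs; apply: eq_bigr => k _.
  by rewrite (nth_map k) ?size_enum_ord // nth_ord_enum.
exists s2; split => //; split => // t.
by rewrite ow Fs2; apply: Hs1.
Qed.
End S.
Section S.
Variable R : rcfType.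

Lemma cs_sq (n : nat) (e v : 'I_n -> R) :
  (\sum_r e r * v r) ^+ 2 <= (\sum_r e r ^+ 2) * (\sum_r v r ^+ 2).
Proof.
set A := \sum_r e r ^+ 2; set B := \sum_r v r ^+ 2; set C := \sum_r e r * v r.
have B0 : 0 <= B by apply: sumr_ge0 => r _; exact: sqr_ge0.
case: (eqVneq B 0) => [Bz|Bnz].
  have vz := psumr_eq0P (fun r _ => sqr_ge0 (v r)) Bz.
  have -> : C = 0.
    rewrite /C big1 // => r _.
    have := vz r isT; move/eqP; rewrite sqrf_eq0 => /eqP ->; by rewrite mulr0.
  by rewrite expr0n /= mulr_ge0 // /A sumr_ge0 // => r _; exact: sqr_ge0.
have Bp : 0 < B by rewrite lt_def Bnz B0.
have h : 0 <= \sum_r (B * e r - C * v r) ^+ 2 by apply: sumr_ge0 => r _; exact: sqr_ge0.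
have E : \sum_r (B * e r - C * v r) ^+ 2 = B * (A * B - C ^+ 2).
  rewrite (eq_bigr (fun r => B ^+ 2 * e r ^+ 2 + (- (2 * B * C)) * (e r * v r) + C ^+ 2 * v r ^+ 2)); last by move=> r _; ring.
  rewrite !big_split /= -!mulr_sumr -/A -/B -/C; ring.
rewrite E in h; by rewrite -subr_ge0; rewrite pmulr_rge0 // in h.
Qed.

Lemma cs (n : nat) (e v : 'I_n -> R) :
  \sum_r e r * v r <= Num.sqrt (\sum_r e r ^+ 2) * Num.sqrt (\sum_r v r ^+ 2).
Proof.
have A0 : 0 <= \sum_r e r ^+ 2 by apply: sumr_ge0 => r _; exact: sqr_ge0.
rewrite -sqrtrM // (le_trans (ler_norm _)) // -sqrtr_sqr ler_sqrt ?cs_sq //.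
by rewrite mulr_ge0 // sumr_ge0 // => r _; exact: sqr_ge0.
Qed.

Lemma foldr_min_le (h : R) s x : x \in s -> foldr Order.min h s <= x.
Proof.
elim: s => //= y s IH; rewrite inE => /orP[/eqP->|/IH h'].
  by rewrite ge_min lexx.
by rewrite ge_min h' orbT.
Qed.

Variable p : nat.

Lemma owl_ge0 (w x : 'cV[R]_p) : (forall i j : 'I_p, (i <= j)%N -> w j 0 <= w i 0) ->
  (forall i : 'I_p, 0 <= w i 0) -> 0 <= owl w x.
Proof.
move=> wm wn; have [s [-> _]] := owl_max x wm.
by rewrite /Fs /wf /mx; apply: sumr_ge0 => k _; apply: mulr_ge0.
Qed.

Lemma owl0 (w : 'cV[R]_p) : (forall i j : 'I_p, (i <= j)%N -> w j 0 <= w i 0) ->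
  owl w 0 = 0.
Proof.
move=> wm; have [s [-> _]] := owl_max 0 wm.
by rewrite /Fs; apply: big1 => k _; rewrite /mx mxE normr0 mulr0.
Qed.

Lemma gap_le (w : 'cV[R]_p) (a b : 'I_p) :
  (forall i j : 'I_p, (i <= j)%N -> w j 0 <= w i 0) -> (a < b)%N ->
  owl_Delta w <= w a 0 - w b 0.
Proof.
move=> wm ab.
have a1p : (a.+1 < p)%N by apply: leq_ltn_trans ab (ltn_ord b).
pose a1 : 'I_p := Ordinal a1p.
apply: (@le_trans _ _ (w a 0 - w a1 0)).
  apply: foldr_min_le; apply/mapP; exists (a, a1) => //.
  by rewrite mem_filter /= eqxx mem_enum.
by rewrite lerD2l lerN2; apply: wm.
Qed.
End S.
Lemma key (R : rcfType) (n p : nat) (A : 'M[R]_(n, p))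
  (y : 'cV[R]_n) (w : 'cV[R]_p) (x : 'cV[R]_p) (i j : 'I_p) :
  (forall i j : 'I_p, (i <= j)%N -> w j 0 <= w i 0) ->
  (forall i : 'I_p, 0 <= w i 0) ->
  (forall k : 'I_p, \sum_(r < n) A r k ^+ 2 = 1) ->
  (forall z : 'cV[R]_p, owl_obj A y w x <= owl_obj A y w z) ->
  norm2 y * Num.sqrt (2 - 2 * (\sum_(r < n) A r i * A r j)
                              * Num.sg (x i 0 * x j 0)) < owl_Delta w ->
  `|x j 0| < `|x i 0| -> False.
Proof.
move=> wm wn Hn Hopt Hlt gij.
set rho := \sum_(r < n) A r i * A r j in Hlt.
set C := 2 - 2 * rho * Num.sg (x i 0 * x j 0) in Hlt.
have ij : i != j by apply/eqP => e; move: gij; rewrite e ltxx.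
have xi0 : x i 0 != 0.
  by rewrite -normr_eq0 gt_eqF // (le_lt_trans _ gij).
pose si := Num.sg (x i 0).
pose S : R := if 0 <= rho then 1 else -1.
pose sj := if x j 0 == 0 then si * S else Num.sg (x j 0).
have si2 : si ^+ 2 = 1 by rewrite /si sqr_sg xi0.
have S2 : S ^+ 2 = 1 by rewrite /S; case: ifP => _; rewrite ?expr1n ?sqrrN ?expr1n.
have nsi : `|si| = 1 by rewrite /si normr_sg xi0.
have nsj : `|sj| = 1.
  rewrite /sj; case: eqP => [_|/eqP h]; last by rewrite normr_sg h.
  by rewrite normrM nsi mul1r /S; case: ifP => _; rewrite ?normrN normr1.
have sj2 : sj ^+ 2 = 1 by rewrite -real_normK ?num_real // nsj expr1n.
have xiE : x i 0 = si * `|x i 0| by exact: numEsg.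
have xjE : x j 0 = sj * `|x j 0|.
  rewrite /sj; case: eqP => [->|_]; first by rewrite normr0 mulr0.
  exact: numEsg.
pose t := si * sj.
pose Ct := 2 - 2 * t * rho.
have CtC : Ct <= C.
  rewrite /Ct /C /t /sj; case: eqP => [xj0 | xjn].
    rewrite xj0 mulr0 sgr0 mulr0 subr0.
    have -> : si * (si * S) = S by rewrite mulrA -expr2 si2 mul1r.
    rewrite /S; case: ifP => h.
      by rewrite mulr1 gerDl oppr_le0 mulr_ge0.
    move/negbT: h; rewrite -ltNge => h.
    by rewrite gerDl oppr_le0 mulrN1 mulNr oppr_ge0 pmulr_rle0 ?ltW.
  by rewrite sgrM -/si le_eqVlt; apply/orP; left; apply/eqP; ring.
pose v r := A r j * sj - A r i * si.
have Sv : \sum_r v r ^+ 2 = Ct.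
  rewrite (eq_bigr (fun r => sj ^+ 2 * A r j ^+ 2 + si ^+ 2 * A r i ^+ 2
             + (- (2 * t)) * (A r i * A r j))); last by move=> r _; rewrite /v /t; ring.
  rewrite !big_split /= -!mulr_sumr !Hn sj2 si2 -/rho /Ct; ring.
have Ct0 : 0 <= Ct by rewrite -Sv sumr_ge0 // => r _; exact: sqr_ge0.
have C0 : 0 <= C by apply: le_trans CtC.
pose e r := (A *m x) r 0 - y r 0.
have Ex : \sum_r ((A *m x) r 0 - y r 0) ^+ 2 = \sum_r e r ^+ 2 by [].
have ney : \sum_r e r ^+ 2 <= \sum_r y r 0 ^+ 2.
  have := Hopt 0; rewrite /owl_obj mulmx0 owl0 // addr0 Ex.
  have -> : \sum_(r < n) ((0 : 'M[R]_(n,1)) r 0 - y r 0) ^+ 2 = \sum_r y r 0 ^+ 2.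
    by apply: eq_bigr => r _; rewrite mxE sub0r sqrrN.
  have := owl_ge0 x wm wn; set E := \sum_r e r ^+ 2; set Y := \sum_r y r 0 ^+ 2.
  move=> h1 h2; lra.
set ny := norm2 y in Hlt.
have ny0 : 0 <= ny by exact: sqrtr_ge0.
set sqC := Num.sqrt C in Hlt.
have sqC0 : 0 <= sqC by exact: sqrtr_ge0.
set Dl := owl_Delta w in Hlt.
pose D := Dl - ny * sqC.
have D0 : 0 < D by rewrite /D subr_gt0.
have Sev : \sum_r e r * v r <= ny * sqC.
  apply: le_trans (cs e v) _; apply: ler_pM; rewrite ?sqrtr_ge0 //.
    by rewrite /ny /norm2 ler_sqrt // sumr_ge0 // => r _; exact: sqr_ge0.
  by rewrite Sv /sqC ler_sqrt.
pose g := `|x i 0| - `|x j 0|.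
have g0 : 0 < g by rewrite /g subr_gt0.
have xj0 : 0 <= `|x j 0| by [].
pose eps := Order.min (g / 4) (D / (Ct + 1)).
have Ct1 : 0 < Ct + 1 by rewrite ltr_wpDl.
have ep0 : 0 < eps by rewrite lt_min !divr_gt0.
have ep1 : eps <= g / 4 by rewrite ge_min lexx.
have ep2 : eps * (Ct + 1) <= D by rewrite -ler_pdivlMr // ge_min lexx orbT.
pose d : 'cV[R]_p := \col_l (if l == i then - (eps * si) else if l == j then eps * sj else 0).
pose z := x + d.
have Hz := Hopt z.
have Az : forall r, (A *m z) r 0 - y r 0 = e r + eps * v r.
  move=> r; rewrite /z mulmxDr mxE [X in _ + X - _]mxE (bigD1 i) // (bigD1 j) 1?eq_sym //=.
  rewrite big1; last by move=> l /andP[li lj]; rewrite mxE (negbTE li) (negbTE lj) mulr0.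
  have ji : (j == i) = false by rewrite eq_sym (negbTE ij).
  rewrite !mxE eqxx ji eqxx /e /v [(A *m x) r 0]mxE; ring.
have Lz : \sum_r ((A *m z) r 0 - y r 0) ^+ 2
     = \sum_r e r ^+ 2 + 2 * eps * \sum_r e r * v r + eps ^+ 2 * Ct.
  rewrite (eq_bigr (fun r => e r ^+ 2 + (2 * eps) * (e r * v r) + eps ^+ 2 * v r ^+ 2)); last by move=> r _; rewrite Az; ring.
  by rewrite !big_split /= -!mulr_sumr Sv.
have [tz [owz [srtz _]]] := owl_max z wm.
have [_ [_ [_ mxx]]] := owl_max x wm.
have mzi : mx z i = `|x i 0| - eps.
  rewrite /mx /z /d !mxE eqxx.
  have -> : x i 0 + - (eps * si) = si * (`|x i 0| - eps) by rewrite {1}xiE; ring.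
  rewrite normrM nsi mul1r ger0_norm //; rewrite /g in ep1; lra.
have mzj : mx z j = `|x j 0| + eps.
  rewrite /mx /z /d !mxE eqxx eq_sym (negbTE ij).
  have -> : x j 0 + eps * sj = sj * (`|x j 0| + eps) by rewrite {1}xjE; ring.
  rewrite normrM nsj mul1r ger0_norm //; lra.
have mzo : forall l, l != i -> l != j -> mx z l = mx x l.
  by move=> l li lj; rewrite /mx /z /d !mxE (negbTE li) (negbTE lj) addr0.
pose a := (tz^-1 i)%g. pose b := (tz^-1 j)%g.
have tza : tz a = i by rewrite /a permKV.
have tzb : tz b = j by rewrite /b permKV.
have ba : b != a by apply/eqP => h; move: ij; rewrite -tza -tzb h eqxx.
have ab : (a < b)%N.
  rewrite ltnNge leq_eqVlt; apply/negP => /orP[/eqP h|h].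
    by move: ba; rewrite (val_inj h) eqxx.
  have := srtz _ _ h; rewrite tza tzb mzi mzj; rewrite /g in ep1; lra.
have Fd : Fs (wf w) (mx z) tz = Fs (wf w) (mx x) tz - (w a 0 - w b 0) * eps.
  rewrite /Fs (bigD1 a) // (bigD1 b) //= [X in _ = X - _](bigD1 a) //.
  rewrite [X in _ = _ + X - _](bigD1 b) //=.
  rewrite [X in _ + (_ + X) = _](eq_bigr (fun k => wf w k * mx x (tz k))); last first.
    move=> k /andP[ka kb]; rewrite mzo //.
      by apply/eqP => h; move: ka; rewrite /a -h permK eqxx.
    by apply/eqP => h; move: kb; rewrite /b -h permK eqxx.
  rewrite tza tzb mzi mzj /wf /mx; ring.
have gap := gap_le wm ab.
have Fx := mxx tz.
move: Hz; rewrite /owl_obj Lz Ex owz Fd.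
set E := \sum_r e r ^+ 2; set SV := \sum_r e r * v r.
set Ox := owl w x; set Fx' := Fs (wf w) (mx x) tz.
set W := w a 0 - w b 0.
move=> Hz.
have h1 : eps * SV <= eps * (ny * sqC) by rewrite ler_wpM2l // ltW.
have h2 : eps * Dl <= eps * W by rewrite ler_wpM2l // ltW.
have h3 : eps * (eps * (Ct + 1)) <= eps * D by rewrite ler_wpM2l // ltW.
have h4 : 0 < eps * D by rewrite mulr_gt0.
rewrite /D in h3 h4.
have Fx2 : Fx' <= Ox := Fx.
clear Fx mxx.
nra.
Qed.

Theorem corollary1 (R : rcfType) (n p : nat) (A : 'M[R]_(n, p))
  (y : 'cV[R]_n) (w : 'cV[R]_p) (xhat : 'cV[R]_p) :
  (1 < p)%N ->
  owl_weights w ->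
  (forall k : 'I_p, \sum_(r < n) A r k = 0) ->
  (forall k : 'I_p, \sum_(r < n) A r k ^+ 2 = 1) ->
  (forall x : 'cV[R]_p, owl_obj A y w xhat <= owl_obj A y w x) ->
  forall i j : 'I_p,
    norm2 y * Num.sqrt (2 - 2 * (\sum_(r < n) A r i * A r j)
                              * Num.sg (xhat i 0 * xhat j 0))
      < owl_Delta w ->
    `|xhat i 0| = `|xhat j 0|.
Proof.
move=> _ [wm [wn _]] _ Hn Hopt i j Hlt.
case: (ltgtP `|xhat i 0| `|xhat j 0|) => // h.
  exfalso; apply: (key (i := j) (j := i) wm wn Hn Hopt _ h).
  rewrite (eq_bigr (fun r => A r i * A r j)) ?[xhat j 0 * _]mulrC //.
  by move=> r _; rewrite mulrC.
by exfalso; apply: (key wm wn Hn Hopt Hlt h).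
Qed.
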